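(* Let $G$ be a connected finite simple graph with at least two vertices. Then its Cheeger constant satisfies $h(G)\geq \dfrac{1}{2(\tau(G)-1)}$.
   Context: $K=D-A$ is the Kirchhoff matrix of $G$ and $\tau(G)={\rm det}(1+K)/{\rm Det}(K)=\prod_{\lambda\neq0}(1+1/\lambda)$, the product over the non-zero eigenvalues of $K$ with multiplicity. The Cheeger constant is $h(G)=\min\{|E(S,V\setminus S)|/|S| : S\subset V,\ 0<|S|\leq |V|/2\}$, where $E(S,V\setminus S)$ is the set of edges with one endpoint in $S$ and one in $V\setminus S$. *)

(* Defs.v *)
From HB Require Import structures.
From mathcomp Require Import all_boot all_order all_algebra all_field.
Set Implicit Arguments. Unset Strict Implicit. Unset Printing Implicit Defensive.
Import Order.TTheory GRing.Theory Num.Theory.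
Local Open Scope ring_scope.

Definition simple_graph (n : nat) (e : rel 'I_n) : Prop :=
  symmetric e /\ irreflexive e.

Definition connected_graph (n : nat) (e : rel 'I_n) : Prop :=
  forall i j : 'I_n, connect e i j.

Definition adj_mx (n : nat) (e : rel 'I_n) : 'M[algC]_n :=
  \matrix_(i, j) (e i j)%:R.

Definition deg_mx (n : nat) (e : rel 'I_n) : 'M[algC]_n :=
  \matrix_(i, j) ((i == j)%:R * (#|[set k | e i k]|)%:R).

Definition kirchhoff (n : nat) (e : rel 'I_n) : 'M[algC]_n :=
  deg_mx e - adj_mx e.

(* The eigenvalues of a square matrix, listed with (algebraic) multiplicity:
   the roots of its (monic) characteristic polynomial. *)
Definition eigenvalues (n : nat) (M : 'M[algC]_n) : seq algC :=
  sval (closed_field_poly_normal (char_poly M)).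

Definition tau (n : nat) (e : rel 'I_n) : algC :=
  \prod_(l <- eigenvalues (kirchhoff e) | l != 0) (1 + l^-1).

(* Number of edges between S and its complement: each edge {u,v} with u in S,
   v not in S is counted once as the ordered pair (u,v). *)
Definition edge_boundary (n : nat) (e : rel 'I_n) (S : {set 'I_n}) : nat :=
  #|[set p : 'I_n * 'I_n | [&& p.1 \in S, p.2 \notin S & e p.1 p.2]]|.

(* Cheeger constant: minimum of |E(S, V\S)|/|S| over 0 < |S| <= |V|/2.
   The default value n%:Q is only returned when no admissible S exists
   (n <= 1); otherwise it is never the minimum since every ratio is < n. *)
Definition cheeger (n : nat) (e : rel 'I_n) : rat :=
  \big[Order.min/(n%:Q)]_(S : {set 'I_n} | (0 < #|S|)%N && (#|S| * 2 <= n)%N)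
     ((edge_boundary e S)%:Q / (#|S|)%:Q).

(* Main.v *)
Require Import Defs.
From HB Require Import structures.
From mathcomp Require Import all_boot all_order all_algebra all_field.
From mathcomp Require Import ring lra.
Import Order.TTheory GRing.Theory Num.Theory.
Local Open Scope ring_scope.
Local Open Scope sesquilinear_scope.
Lemma char_poly_conj n (A : 'M[algC]_n) (P : 'M[algC]_n) :
  P \in unitmx -> char_poly (invmx P *m A *m P) = char_poly A.
Proof.
move=> Pu; rewrite /char_poly /char_poly_mx.
have eX : ('X%:M : 'M[{poly algC}]_n) = map_mx polyC (invmx P) *m 'X%:M *m map_mx polyC P.
  by rewrite mul_mx_scalar -scalemxAl -map_mxM mulVmx // map_mx1 scalemx1.
rewrite {1}eX !map_mxM -mulmxBl -mulmxBr !det_mulmx mulrC mulrA -det_mulmx.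
by rewrite -map_mxM mulmxV // map_mx1 det1 mul1r.
Qed.

Lemma eig_perm n (A : 'M[algC]_n) (P : 'M[algC]_n) (D : 'rV[algC]_n) :
  P \in unitmx -> A = invmx P *m diag_mx D *m P ->
  perm_eq (eigenvalues A) [seq D 0 i | i <- index_enum 'I_n].
Proof.
move=> Pu eA; apply: prod_XsubC_eq.
have h : char_poly A = lead_coef (char_poly A) *: \prod_(z <- eigenvalues A) ('X - z%:P)
  := svalP (closed_field_poly_normal (char_poly A)).
rewrite (monicP (char_poly_monic A)) scale1r in h; rewrite -h.
rewrite eA char_poly_conj // char_poly_trig ?diag_mx_is_trig //.
rewrite big_map /=; apply: eq_bigr => i _; rewrite mxE eqxx mulr1n //.
Qed.
Lemma mx3E n (x : 'rV[algC]_n) (A : 'M[algC]_n) (y : 'cV[algC]_n) :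
  (x *m A *m y) 0 0 = \sum_j \sum_k x 0 j * A j k * y k 0.
Proof.
rewrite mxE; under eq_bigr => k _ do rewrite mxE big_distrl /=.
by rewrite exchange_big.
Qed.

Lemma deg_sum n (e : rel 'I_n) j :
  (#|[set k | e j k]|)%:R = \sum_k (e j k)%:R :> algC.
Proof.
rewrite -sum1_card natr_sum big_mkcond /=; apply: eq_bigr => k _.
by rewrite inE; case: (e j k).
Qed.

Lemma kirchhoff_quad n (e : rel 'I_n) (x : 'I_n -> algC) : symmetric e ->
  2 * \sum_j \sum_k x j * kirchhoff e j k * (x k)^*
  = \sum_j \sum_k (e j k)%:R * `|x j - x k| ^+ 2.
Proof.
move=> esym.
set S1 := \sum_j \sum_k (e j k)%:R * (x j * (x j)^* - x j * (x k)^*).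
have L : \sum_j \sum_k x j * kirchhoff e j k * (x k)^* = S1.
  rewrite /S1; apply: eq_bigr => j _.
  under eq_bigr => k _ do rewrite !mxE mulrBr mulrBl.
  rewrite sumrB.
  rewrite (bigD1 j) //= eqxx mul1r big1 => [|k /negPf kj]; last first.
    by rewrite eq_sym kj mul0r mulr0 mul0r.
  rewrite addr0 deg_sum mulr_sumr mulr_suml -sumrB.
  by apply: eq_bigr => k _; rewrite mulrBr; congr (_ - _); ring.
rewrite L.
have R : \sum_j \sum_k (e j k)%:R * `|x j - x k| ^+ 2 =
   S1 + \sum_j \sum_k (e j k)%:R * (x k * (x k)^* - x k * (x j)^*).
  rewrite /S1 -big_split /=; apply: eq_bigr => j _.
  rewrite -big_split /=; apply: eq_bigr => k _.
  rewrite normCK rmorphB /=; ring.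
rewrite R exchange_big /=.
have -> : \sum_j \sum_i (e i j)%:R * (x j * (x j)^* - x j * (x i)^*) = S1.
  by apply: eq_bigr => j _; apply: eq_bigr => i _; rewrite esym.
by rewrite mulr2n mulrDl mul1r.
Qed.

Lemma mx3E' n (A B C : 'M[algC]_n) i l :
  (A *m B *m C) i l = \sum_j \sum_k A i j * B j k * C k l.
Proof.
rewrite mxE; under eq_bigr => k _ do rewrite mxE big_distrl /=.
by rewrite exchange_big.
Qed.

Lemma connect_const n (e : rel 'I_n) (h : 'I_n -> algC) :
  (forall a b, e a b -> h a = h b) -> forall a b, connect e a b -> h a = h b.
Proof.
move=> H a b /connectP [p pth ->]; elim: p a pth => //= c p IH a /andP [eac pth].
by rewrite (H _ _ eac) (IH _ pth).
Qed.

Lemma prod_ge_one (I : finType) (P : pred I) (x : I -> algC) i :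
  (forall j, P j -> 0 <= x j) -> P i ->
  1 + x i <= \prod_(j | P j) (1 + x j).
Proof.
move=> x0 Pi; rewrite (bigD1 i) //= -[X in X <= _]mulr1.
apply: ler_wpM2l; first by rewrite addr_ge0 ?x0.
have h1 : \prod_(j | P j && (j != i)) (1 : algC) = 1 by rewrite big1.
rewrite -[X in X <= _]h1.
apply: ler_prod => j /andP [Pj _]; rewrite ler01 /= lerDl x0 //.
Qed.

Lemma card_sum (T : finType) (C : pred T) :
  (#|[set x | C x]|)%:R = \sum_x ((C x)%:R : algC).
Proof.
by rewrite -sum1_card natr_sum big_mkcond /=; apply: eq_bigr => x _; rewrite inE; case: (C x).
Qed.

Theorem mainTheorem5 (n : nat) (e : rel 'I_n) :
  simple_graph e -> connected_graph e -> (2 <= n)%N ->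
  1 / (2 * (tau e - 1)) <= ratr (cheeger e) :> algC.
Proof.
move=> [es eirr] econ n2.
have n0 : (0 < n)%N by apply: leq_trans n2.
pose i0 : 'I_n := Ordinal n0.
set K := kirchhoff e.
have KtK : K ^t* = K.
  apply/matrixP => i j; rewrite !mxE rmorphB rmorphM /= !conjC_nat eq_sym es.
  by case: (i =P j) => [->//|ij]; rewrite !mul0r.
have Knorm : K \is normalmx by apply/normalmxP; rewrite KtK.
set P := spectralmx K; set D := spectral_diag K.
have PU : P \is unitarymx by apply: spectral_unitarymx.
have Pu : P \in unitmx by apply: unitarymx_unit.
have eK : K = invmx P *m diag_mx D *m P by apply/orthomx_spectralP.
have iP : invmx P = P ^t* by apply: invmx_unitary.
have PPt : P *m P ^t* = 1%:M by apply/unitarymxP.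
have PtP : P ^t* *m P = 1%:M by rewrite -iP mulVmx.
have tauE : tau e = \prod_(i | D 0 i != 0) (1 + (D 0 i)^-1).
  by rewrite /tau (perm_big _ (@eig_perm _ _ _ _ Pu eK)) big_map.
have PKP : P *m K *m P ^t* = diag_mx D.
  by rewrite eK iP !mulmxA PPt mul1mx -mulmxA PPt mulmx1.
have DE i : D 0 i = \sum_j \sum_k P i j * K j k * (P i k)^*.
  have := congr1 (fun M : 'M[algC]_n => M i i) PKP; rewrite /= mx3E' mxE eqxx mulr1n => <-.
  by apply: eq_bigr => j _; apply: eq_bigr => k _; rewrite !mxE.
have D2 i : 2 * D 0 i = \sum_j \sum_k (e j k)%:R * `|P i j - P i k| ^+ 2.
  by rewrite DE (@kirchhoff_quad _ _ (fun j => P i j) es).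
have Dge0 i : 0 <= D 0 i.
  have : 0 <= 2 * D 0 i.
    by rewrite D2; apply: sumr_ge0 => j _; apply: sumr_ge0 => k _; rewrite mulr_ge0 ?ler0n // exprn_ge0.
  by rewrite pmulr_rge0.
have Dconst i : D 0 i = 0 -> forall j, P i j = P i i0.
  move=> Di0 j; apply: (@connect_const _ e (fun j => P i j)) => [a b eab|]; last first.
    exact: econ.
  have := D2 i; rewrite Di0 mulr0 => /esym /psumr_eq0P H.
  have := H (fun a _ => sumr_ge0 _ (fun b _ => mulr_ge0 (ler0n _ _) (exprn_ge0 _ (normr_ge0 _)))) a isT.
  move=> /psumr_eq0P H2.
  have := H2 (fun b _ => mulr_ge0 (ler0n _ _) (exprn_ge0 _ (normr_ge0 _))) b isT.
  by rewrite eab mul1r => /eqP; rewrite expf_eq0 /= normr_eq0 subr_eq0 => /eqP.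
have Tb i : D 0 i != 0 -> 1 <= D 0 i * (tau e - 1).
  move=> Dn0.
  have h : 1 + (D 0 i)^-1 <= tau e.
    by rewrite tauE; apply: (@prod_ge_one _ (fun j => D 0 j != 0) (fun j => (D 0 j)^-1)) => // j _; rewrite invr_ge0.
  have h2 : (D 0 i)^-1 <= tau e - 1 by rewrite lerBrDl.
  by rewrite -[X in X <= _](divff Dn0) ler_wpM2l.
have sumS (S : {set 'I_n}) : \sum_j ((j \in S)%:R : algC) = (#|S|)%:R.
  by rewrite -sum1_card natr_sum [RHS]big_mkcond; apply: eq_bigr => j _; case: (j \in S).
have core (S : {set 'I_n}) : (0 < #|S|)%N -> (#|S| * 2 <= n)%N ->
    (#|S|)%:R <= 2 * (edge_boundary e S)%:R * (tau e - 1) :> algC.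
  move=> Spos Sn.
  set s : algC := (#|S|)%:R; set nn : algC := n%:R.
  have nn0 : nn != 0 by rewrite pnatr_eq0 -lt0n.
  pose f : 'rV[algC]_n := \row_j ((j \in S)%:R - s / nn).
  pose g := f *m P ^t*.
  have freal j : (f 0 j)^* = f 0 j.
    by rewrite mxE rmorphB fmorph_div /= !conjC_nat.
  have fsum : \sum_j f 0 j = 0.
    under eq_bigr => j _ do rewrite mxE.
    by rewrite sumrB sumS sumr_const card_ord -(mulr_natr (s / nn)) -/nn divfK // subrr.
  have gt : g ^t* = P *m f ^t*.
    apply/matrixP => i j; rewrite !mxE rmorph_sum; apply: eq_bigr => k _.
    by rewrite !mxE rmorphM /= conjCK mulrC.
  have Q2 : \sum_j \sum_k f 0 j * K j k * (f 0 k)^* = \sum_i D 0 i * `|g 0 i| ^+ 2.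
    have -> : \sum_j \sum_k f 0 j * K j k * (f 0 k)^* = (f *m K *m f ^t*) 0 0.
      by rewrite mx3E; apply: eq_bigr => j _; apply: eq_bigr => k _; rewrite !mxE.
    rewrite eK iP -!mulmxA -gt !mulmxA -/g mul_mx_diag mxE.
    by apply: eq_bigr => i _; rewrite !mxE normCK; ring.
  have Q3 : \sum_j f 0 j * (f 0 j)^* = \sum_i `|g 0 i| ^+ 2.
    have -> : \sum_j f 0 j * (f 0 j)^* = (f *m f ^t*) 0 0.
      by rewrite mxE; apply: eq_bigr => j _; rewrite !mxE.
    have -> : f *m f ^t* = g *m g ^t*.
      by rewrite gt /g mulmxA -[f *m _ *m P]mulmxA PtP mulmx1.
    by rewrite mxE; apply: eq_bigr => i _; rewrite !mxE normCK.
  have Q5 i : D 0 i = 0 -> g 0 i = 0.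
    move=> Di0; rewrite mxE.
    under eq_bigr => j _ do rewrite !mxE (Dconst i Di0 j).
    rewrite -big_distrl /=.
    have -> : \sum_j ((j \in S)%:R - s / nn) = \sum_j f 0 j by apply: eq_bigr => j _; rewrite mxE.
    by rewrite fsum mul0r.
  have Q1 : \sum_j \sum_k f 0 j * K j k * (f 0 k)^* = (edge_boundary e S)%:R.
    have two0 : (2 : algC) != 0 by rewrite pnatr_eq0.
    apply: (mulfI two0).
    rewrite (@kirchhoff_quad _ _ (fun j => f 0 j) es) /=.
    pose A j k := (((j \in S) && (k \notin S) && e j k)%:R : algC).
    have -> : \sum_j \sum_k (e j k)%:R * `|f 0 j - f 0 k| ^+ 2 =
              \sum_j \sum_k (A j k + A k j).
      apply: eq_bigr => j _; apply: eq_bigr => k _.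
      rewrite !mxE opprB addrA subrK /A (es k j).
      by case: (j \in S); case: (k \in S); case: (e j k); rewrite /= ?subrr ?normr0 ?normrN1 ?normr1 ?expr1n ?expr0n ?mul0r ?mul1r ?add0r ?addr0 ?subr0 ?sub0r ?normrN ?normr1 ?expr1n.
    have -> : (edge_boundary e S)%:R = \sum_j \sum_k A j k.
      by rewrite /edge_boundary card_sum pair_bigA; apply: eq_bigr => p _; rewrite /A andbA.
    rewrite (eq_bigr (fun j => \sum_k A j k + \sum_k A k j)) => [|j _]; last by rewrite big_split.
    by rewrite big_split /= [X in _ + X]exchange_big /= mulr2n mulrDl mul1r.
  have Q4 : s <= 2 * \sum_j f 0 j * (f 0 j)^*.
    rewrite (eq_bigr (fun j => (j \in S)%:R * (1 - 2 * (s / nn)) + (s / nn) ^+ 2)); last first.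
      move=> j _; rewrite freal mxE.
      by case: (j \in S); rewrite /=; ring.
    rewrite big_split /= -big_distrl /= sumS sumr_const card_ord -/s.
    rewrite -subr_ge0.
    have -> : 2 * (s * (1 - 2 * (s / nn)) + (s / nn) ^+ 2 *+ n) - s = s * (nn - 2 * s) / nn.
      by rewrite -mulr_natr -/nn; field; exact: nn0.
    have -> : nn - 2 * s = (n - #|S| * 2)%N%:R by rewrite natrB // natrM mulrC.
    by rewrite divr_ge0 ?mulr_ge0 ?ler0n.
  have Q6 : \sum_i `|g 0 i| ^+ 2 <= (\sum_i D 0 i * `|g 0 i| ^+ 2) * (tau e - 1).
    rewrite mulr_suml; apply: ler_sum => i _.
    have [Di0|Dn0] := eqVneq (D 0 i) 0.
      by rewrite Di0 (Q5 i Di0) normr0 expr0n /= !mul0r.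
    rewrite mulrAC -[X in X <= _]mul1r; apply: ler_wpM2r; first exact: exprn_ge0.
    exact: Tb.
  have := Q4; rewrite Q3 => /le_trans; apply.
  by rewrite -mulrA ler_wpM2l // -Q1 Q2.
have ratio (S : {set 'I_n}) : (0 < #|S|)%N -> (#|S| * 2 <= n)%N ->
    1 / (2 * (tau e - 1)) <= (edge_boundary e S)%:R / (#|S|)%:R.
  move=> Sp Sn; have := core S Sp Sn.
  set b := edge_boundary e S; set t := tau e - 1 => h.
  have sp : 0 < (#|S|)%:R :> algC by rewrite ltr0n.
  have bt : 0 < 2 * b%:R * t by apply: lt_le_trans h.
  have b0 : (0 < b)%N.
    by rewrite lt0n; apply/negP => /eqP b0; move: bt; rewrite b0 mulr0 mul0r ltxx.
  have tp : 0 < t by move: bt; rewrite pmulr_rgt0 // pmulr_rgt0 // ltr0n.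
  rewrite ler_pdivlMr // mul1r mulrC ler_pdivrMr ?pmulr_rgt0 //.
  by rewrite mulrCA mulrA.
pose S0 := [set i0].
have S0c : #|S0| = 1%N by rewrite cards1.
have base : 1 / (2 * (tau e - 1)) <= n%:R.
  apply: (le_trans (ratio S0 _ _)); rewrite ?S0c // divr1 ler_nat.
  apply: (@leq_trans #|setX S0 [set: 'I_n]|); last by rewrite cardsX S0c cardsT card_ord mul1n.
  by apply: subset_leq_card; apply/subsetP => p; rewrite !inE => /and3P [-> _ _].
rewrite /cheeger.
apply: (big_ind (fun q : rat => 1 / (2 * (tau e - 1)) <= ratr q)).
- by rewrite ratr_int.
- move=> x y hx hy; case: leP => _ //.
- move=> S /andP [Sp Sn].
  by rewrite fmorph_div /= !ratr_int; apply: ratio.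
Qed.
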